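(* Let $a>0$, $\alpha>0$, $b\ge 0$, $\sigma^2>0$ and $n>0$ be real numbers. For $s\in(0,n)$ let $V_{\mathrm{FT+PPI}}(s)=\frac{a s^{-\alpha}+b}{n-s}$ and $V_{\mathrm{mean}}=\sigma^2/n$, and define $$q(s)=\sigma^2(n-s)-n\big(a s^{-\alpha}+b\big),\qquad s\in(0,n).$$ Then: (i) there exists $s\in(0,n)$ with $V_{\mathrm{FT+PPI}}(s)<V_{\mathrm{mean}}$ if and only if $\sup_{s\in(0,n)} q(s)>0$; (ii) $q$ is strictly concave on $(0,\infty)$, and there exists $s\in(0,n)$ with $V_{\mathrm{FT+PPI}}(s)<V_{\mathrm{mean}}$ if and only if $$\frac{b}{\sigma^2}<1-\Big(1+\frac1\alpha\Big)\Big(\frac{a\alpha n^{-\alpha}}{\sigma^2}\Big)^{1/(\alpha+1)}.$$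
   Context: Interpretation: $\sigma^2=\mathrm{Var}(Y)$; the residual variance of a predictor fine-tuned on $s$ labeled samples is assumed to follow the scaling law $\mathrm{Var}(Y-f^{(s)}(X))=a s^{-\alpha}+b$; in the regime of infinitely many unlabeled samples the prediction-powered estimator using the remaining $n-s$ labeled samples has variance $V_{\mathrm{FT+PPI}}(s)$, while the sample mean of all $n$ labeled samples has variance $V_{\mathrm{mean}}$. *)

(* Defs.v *)
From mathcomp Require Import all_boot all_order all_algebra.
From mathcomp Require Import all_classical all_reals all_analysis.
Set Implicit Arguments. Unset Strict Implicit. Unset Printing Implicit Defensive.
Import Order.TTheory GRing.Theory Num.Theory.
Local Open Scope ring_scope.
Local Open Scope classical_set_scope.

Definition V_FTPPI (R : realType) (a alpha b n s : R) : R :=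
  (a * s `^ (- alpha) + b) / (n - s).

Definition V_mean (R : realType) (sigma2 n : R) : R := sigma2 / n.

Definition qfun (R : realType) (sigma2 a alpha b n s : R) : R :=
  sigma2 * (n - s) - n * (a * s `^ (- alpha) + b).

Definition strictly_concave_on (R : realType) (D : set R) (f : R -> R) : Prop :=
  forall x y t : R, D x -> D y -> x != y -> 0 < t -> t < 1 ->
    t * f x + (1 - t) * f y < f (t * x + (1 - t) * y).

(* Main.v *)
Require Import Defs.
From mathcomp Require Import all_boot all_order all_algebra.
From mathcomp Require Import all_classical all_reals all_analysis.
From mathcomp Require Import ring lra.
Import Order.TTheory GRing.Theory Num.Theory.
Local Open Scope ring_scope.
Local Open Scope classical_set_scope.

Section Aux.
Variable R : realType.

Lemma ln_lt_sub1 (u : R) : 0 < u -> u != 1 -> ln u < u - 1.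
Proof.
move=> u0 u1.
have hl : ln u != 0.
  apply/eqP => h; move/eqP: u1; apply.
  by rewrite -[u](@lnK R) ?posrE // h expR0.
have := expR_gt1Dx hl; rewrite lnK ?posrE //; lra.
Qed.

Lemma tangent_strict (alpha s t : R) : 0 < alpha -> 0 < s -> 0 < t -> s != t ->
  t `^ (- alpha) - alpha * t `^ (- alpha) / t * (s - t) < s `^ (- alpha).
Proof.
move=> a0 s0 t0 st.
rewrite /powR !gt_eqF //.
set E := expR (- alpha * ln t).
have E0 : 0 < E by apply: expR_gt0.
have -> : expR (- alpha * ln s) = E * expR (- alpha * (ln s - ln t)).
  by rewrite /E -expRD; congr expR; ring.
have hu : s / t != 1.
  apply/eqP => h; move/eqP: st; apply.
  by rewrite -(divfK (lt0r_neq0 t0) s) h mul1r.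
have hln := @ln_lt_sub1 (s / t) (divr_gt0 s0 t0) hu.
rewrite ln_div ?posrE // in hln.
have h1 := expR_ge1Dx (- alpha * (ln s - ln t)).
have h2 : 1 - alpha * (s / t - 1) < expR (- alpha * (ln s - ln t)).
  apply: lt_le_trans h1.
  have : alpha * (ln s - ln t) < alpha * (s / t - 1) by rewrite ltr_pM2l.
  lra.
have h3 : E * (1 - alpha * (s / t - 1)) < E * expR (- alpha * (ln s - ln t)) by rewrite ltr_pM2l.
have -> : E - alpha * E / t * (s - t) = E * (1 - alpha * (s / t - 1)).
  by field; rewrite gt_eqF.
exact: h3.
Qed.

Lemma tangent (alpha s t : R) : 0 < alpha -> 0 < s -> 0 < t ->
  t `^ (- alpha) - alpha * t `^ (- alpha) / t * (s - t) <= s `^ (- alpha).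
Proof.
move=> a0 s0 t0; have [->|st] := eqVneq s t.
  by rewrite subrr mulr0 subr0.
exact/ltW/tangent_strict.
Qed.

End Aux.

Lemma L_viff (R : realType) (a alpha b sigma2 n : R)
  (ha : 0 < a) (halpha : 0 < alpha) (hb : 0 <= b) (hsigma2 : 0 < sigma2)
  (hn : 0 < n) : forall s, 0 < s < n ->
    (V_FTPPI a alpha b n s < V_mean sigma2 n) <-> 0 < qfun sigma2 a alpha b n s.
Proof.
set q := qfun sigma2 a alpha b n.
move=> s /andP[s0 sn]; rewrite /V_FTPPI /V_mean /q /qfun.
have ns : 0 < n - s by rewrite subr_gt0.
rewrite ltr_pdivrMr // mulrAC ltr_pdivlMr //.
split => h; lra.
Qed.

Lemma L_sup (R : realType) (a alpha b sigma2 n : R)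
  (ha : 0 < a) (halpha : 0 < alpha) (hb : 0 <= b) (hsigma2 : 0 < sigma2)
  (hn : 0 < n) :
  (exists s, 0 < s < n /\ 0 < qfun sigma2 a alpha b n s) <->
     0 < sup [set qfun sigma2 a alpha b n s | s in `]0, n[].
Proof.
set q := qfun sigma2 a alpha b n.
have qle : forall s, 0 < s -> q s <= sigma2 * n.
  move=> s s0; rewrite /q /qfun.
  have h1 : 0 <= n * (a * s `^ (- alpha) + b).
    by apply: mulr_ge0; [exact: ltW | apply: addr_ge0 => //; apply: mulr_ge0; [exact: ltW | exact: powR_ge0]].
  have h2 : 0 <= sigma2 * s by apply: mulr_ge0; exact: ltW.
  lra.
set S := [set qfun sigma2 a alpha b n s | s in `]0, n[].
have hS : has_sup S.
  split.
    exists (q (n / 2)); exists (n / 2) => //=; rewrite in_itv /=.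
    apply/andP; split; lra.
  exists (sigma2 * n) => x [s]; rewrite /= in_itv /= => /andP[s0 _] <-.
  exact: qle.
split.
  move=> [s [hs qs]]; apply: lt_le_trans qs _.
  apply: (sup_upper_bound hS); exists s => //=; by rewrite in_itv.
move=> hsup; have [e [s hs <-] he] := sup_adherent hsup hS.
exists s; split; first by move: hs; rewrite /= in_itv.
by move: he; rewrite subrr.
Qed.

Lemma L_conc (R : realType) (a alpha b sigma2 n : R)
  (ha : 0 < a) (halpha : 0 < alpha) (hb : 0 <= b) (hsigma2 : 0 < sigma2)
  (hn : 0 < n) :
  strictly_concave_on `]0, +oo[ (qfun sigma2 a alpha b n).
Proof.
set q := qfun sigma2 a alpha b n.
move=> x y t; rewrite /= !in_itv /= !andbT => x0 y0 xy t0 t1.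
set z := t * x + (1 - t) * y.
have z0 : 0 < z by rewrite /z; apply: addr_gt0; apply: mulr_gt0 => //; lra.
have xz : x != z.
  have -> : x = z + (1 - t) * (x - y) by rewrite /z; ring.
  rewrite -subr_eq0 addrC addKr; apply: mulf_neq0; first by apply: lt0r_neq0; lra.
  by rewrite subr_eq0.
have yz : y != z.
  have -> : y = z + t * (y - x) by rewrite /z; ring.
  rewrite -subr_eq0 addrC addKr; apply: mulf_neq0; first by apply: lt0r_neq0.
  by rewrite subr_eq0 eq_sym.
set fz := z `^ (- alpha).
set g := alpha * fz / z.
have h1 := @tangent_strict R alpha x z halpha x0 z0 xz.
have h2 := @tangent_strict R alpha y z halpha y0 z0 yz.
rewrite -/fz -/g in h1 h2.
have na0 : 0 < n * a by apply: mulr_gt0.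
have k1 : t * (n * a) * (fz - g * (x - z)) < t * (n * a) * x `^ (- alpha).
  by rewrite ltr_pM2l // mulr_gt0.
have k2 : (1 - t) * (n * a) * (fz - g * (y - z)) < (1 - t) * (n * a) * y `^ (- alpha).
  by rewrite ltr_pM2l // mulr_gt0 // subr_gt0.
have e : t * (n * a) * (fz - g * (x - z)) + (1 - t) * (n * a) * (fz - g * (y - z))
    = n * a * fz by rewrite /z; ring.
rewrite /qfun -/z -/fz.
have e2 : t * (sigma2 * (n - x) - n * (a * x `^ (- alpha) + b)) +
  (1 - t) * (sigma2 * (n - y) - n * (a * y `^ (- alpha) + b)) =
  sigma2 * (n - z) - n * b - (t * (n * a) * x `^ (- alpha) + (1 - t) * (n * a) * y `^ (- alpha)).
  by rewrite /z; ring.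
have k := ltrD k1 k2; rewrite e in k.
have e3 : n * (a * fz + b) = n * a * fz + n * b by ring.
rewrite e2 /q /qfun -/fz e3; lra.
Qed.

Lemma L_ii (R : realType) (a alpha b sigma2 n : R)
  (ha : 0 < a) (halpha : 0 < alpha) (hb : 0 <= b) (hsigma2 : 0 < sigma2)
  (hn : 0 < n) :
  (exists s, 0 < s < n /\ 0 < qfun sigma2 a alpha b n s) <->
     b / sigma2 < 1 - (1 + alpha^-1) *
        ((a * alpha * n `^ (- alpha)) / sigma2) `^ ((alpha + 1)^-1).
Proof.
set q := qfun sigma2 a alpha b n.
set N := n `^ (- alpha).
set c := a * alpha * N / sigma2.
set r := c `^ (alpha + 1)^-1.
have N0 : 0 < N by apply: powR_gt0.
have c0 : 0 < c by rewrite /c; apply: divr_gt0 => //; apply: mulr_gt0 => //; apply: mulr_gt0.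
have r0 : 0 < r by apply: powR_gt0.
set Ra := r `^ alpha.
have Ra0 : 0 < Ra by apply: powR_gt0.
have F1 : r * Ra = c.
  have -> : r * Ra = r `^ (alpha + 1).
    rewrite powRD; last by apply/implyP => _; exact: lt0r_neq0.
    rewrite powRr1; last exact: ltW.
    by rewrite /Ra mulrC.
  rewrite /r -powRrM mulVf ?powRr1 //; first exact: ltW.
  by apply: lt0r_neq0; lra.
set z := n * r.
have z0 : 0 < z by apply: mulr_gt0.
have F2 : z `^ (- alpha) = N / Ra.
  rewrite /z powRM; [|exact: ltW|exact: ltW].
  by rewrite [r `^ (- alpha)]powRN.
have E3 : a * N / Ra = sigma2 * r / alpha.
  have : a * N = c * sigma2 / alpha.
    rewrite /c; field; by rewrite ?(gt_eqF r0, gt_eqF Ra0, gt_eqF hn, gt_eqF halpha, gt_eqF hsigma2, gt_eqF N0).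
  move=> ->; rewrite -F1; field; by rewrite ?(gt_eqF r0, gt_eqF Ra0, gt_eqF hn, gt_eqF halpha, gt_eqF hsigma2, gt_eqF N0).
have Qz : q z = n * ((1 - (1 + alpha^-1) * r) * sigma2 - b).
  rewrite /q /qfun F2 mulrA E3 /z; field; by rewrite ?(gt_eqF r0, gt_eqF Ra0, gt_eqF hn, gt_eqF halpha, gt_eqF hsigma2, gt_eqF N0).
have G : n * a * (alpha * (N / Ra) / z) = sigma2.
  have : n * a * (alpha * (N / Ra) / z) = alpha * (a * N / Ra) / r.
    rewrite /z; field; by rewrite ?(gt_eqF r0, gt_eqF Ra0, gt_eqF hn, gt_eqF halpha, gt_eqF hsigma2, gt_eqF N0).
  move=> ->; rewrite E3; field; by rewrite ?(gt_eqF r0, gt_eqF Ra0, gt_eqF hn, gt_eqF halpha, gt_eqF hsigma2, gt_eqF N0).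
have qmax : forall s, 0 < s -> q s <= q z.
  move=> s s0.
  have h := @tangent R alpha s z halpha s0 z0.
  rewrite F2 in h.
  have k : n * a * (N / Ra - alpha * (N / Ra) / z * (s - z)) <= n * a * s `^ (- alpha).
    by rewrite ler_pM2l // mulr_gt0.
  have e : n * a * (N / Ra - alpha * (N / Ra) / z * (s - z)) = n * a * (N / Ra) - sigma2 * (s - z).
    by rewrite -G; ring.
  rewrite /q /qfun F2.
  lra.
have kr : r < (1 + alpha^-1) * r.
  by rewrite mulrDl mul1r ltrDl mulr_gt0 // invr_gt0.
split.
  move=> [s [/andP[s0 sn] qs]].
  have : 0 < q z by apply: lt_le_trans qs (qmax s s0).
  rewrite Qz pmulr_rgt0 // ltr_pdivrMr //; lra.
move=> hc.
have hX : 0 < (1 - (1 + alpha^-1) * r) * sigma2 - b.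
  by move: hc; rewrite ltr_pdivrMr //; lra.
have hY : 0 < 1 - (1 + alpha^-1) * r.
  have : 0 < (1 - (1 + alpha^-1) * r) * sigma2 by lra.
  by rewrite pmulr_lgt0.
exists z; split.
  by rewrite z0 /z gtr_pMr //; lra.
by rewrite Qz pmulr_rgt0.
Qed.

Theorem proposition3 (R : realType) (a alpha b sigma2 n : R)
  (ha : 0 < a) (halpha : 0 < alpha) (hb : 0 <= b) (hsigma2 : 0 < sigma2)
  (hn : 0 < n) :
  ((exists s : R, 0 < s < n /\ V_FTPPI a alpha b n s < V_mean sigma2 n) <->
     0 < sup [set qfun sigma2 a alpha b n s | s in `]0, n[]) /\
  (strictly_concave_on `]0, +oo[ (qfun sigma2 a alpha b n) /\
   ((exists s : R, 0 < s < n /\ V_FTPPI a alpha b n s < V_mean sigma2 n) <->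
     b / sigma2 < 1 - (1 + alpha^-1) *
        ((a * alpha * n `^ (- alpha)) / sigma2) `^ ((alpha + 1)^-1))).
Proof.
have ex_iff : (exists s : R, 0 < s < n /\ V_FTPPI a alpha b n s < V_mean sigma2 n)
    <-> (exists s, 0 < s < n /\ 0 < qfun sigma2 a alpha b n s).
  split => -[s [hs h]]; exists s; split => //; by apply/(@L_viff _ _ _ _ _ _ ha halpha hb hsigma2 hn).
rewrite ex_iff; split; first exact: L_sup.
split; first exact: L_conc.
exact: L_ii.
Qed.
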